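(* Let $G$ be a $2$-connected non-Hamiltonian graph of order $n\ge 4$. Then $px_3(G)\le\lfloor n/2\rfloor$.
   Context: All graphs are finite, simple and undirected. An edge-coloring assigns colors to edges, adjacent edges being allowed to share a color. A tree in an edge-colored graph is proper if no two adjacent edges of it receive the same color. An edge-coloring of $G$ is a $3$-proper coloring if for every $3$-element set $S\subseteq V(G)$ there is a proper tree in $G$ containing all vertices of $S$; $px_3(G)$ is the minimum number of colors in a $3$-proper coloring of $G$. *)

(* Defs.v *)
(* A finite simple graph is a finType T with a symmetric,
   irreflexive adjacency relation e : rel T.  Edges are the 2-sets [set x; y]
   with e x y. *)
From mathcomp Require Import all_boot.
Set Implicit Arguments. Unset Strict Implicit. Unset Printing Implicit Defensive.

Section Graphs.
Variable T : finType.
Variable e : rel T.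

Definition two_connected : bool :=
  (2 < #|T|) &&
  [forall x, forall y, connect e x y] &&
  [forall v, forall x, forall y, (x != v) && (y != v) ==>
      connect [rel a b | [&& a != v, b != v & e a b]] x y].

Definition hamiltonian : Prop :=
  2 < #|T| /\ exists s : seq T, [/\ uniq s, size s = #|T| & cycle e s].

Definition is_subtree (V : {set T}) (E : {set {set T}}) : bool :=
  [forall f in E, exists x, exists y,
      [&& x \in V, y \in V, e x y & f == [set x; y]]] &&
  [forall x in V, forall y in V, connect [rel a b | [set a; b] \in E] x y] &&
  (#|E| == #|V| - 1) && (V != set0).

Definition proper_on (k : nat) (c : {ffun {set T} -> 'I_k})
    (E : {set {set T}}) : bool :=
  [forall f1 in E, forall f2 in E,
     (f1 != f2) && (f1 :&: f2 != set0) ==> (c f1 != c f2)].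

Definition three_proper (k : nat) (c : {ffun {set T} -> 'I_k}) : bool :=
  [forall S : {set T}, (#|S| == 3) ==>
     [exists V : {set T}, exists E : {set {set T}},
        [&& is_subtree V E, S \subset V & proper_on c E]]].

Definition k_three_proper (k : nat) : bool :=
  [exists c : {ffun {set T} -> 'I_k}, three_proper c].

(* Only the
   (at most #|{set T}|) colour values on sets matter, so if some k works then
   some k <= #|{set T}| works; the search range is therefore exhaustive. *)
Definition px3 : nat := find k_three_proper (iota 0 (#|{set T}|).+1).

End Graphs.

(* Main.v *)
Require Import Defs.
From mathcomp Require Import all_boot zify.
Set Implicit Arguments. Unset Strict Implicit. Unset Printing Implicit Defensive.

Section Grow.
Variable T : finType.

Lemma cross (R : rel T) (A : {set T}) s p :
  path R s p -> s \in A -> last s p \notin A ->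
  exists w, exists w', [/\ w \in A, w' \notin A & R w w'].
Proof.
elim: p s => [|z p IH] s /=; first by move=> _ ->.
case/andP=> Rsz pz sA lA.
case: (boolP (z \in A)) => zA; first exact: IH zA lA.
by exists s, z.
Qed.

Definition valid (R : rel T) r (A : {set T}) (par : T -> T) (h : T -> nat) :=
  forall x, x \in A -> x != r -> [/\ par x \in A, R x (par x) & h (par x) < h x].

Lemma grow (R : rel T) (Rsym : symmetric R) r :
  exists par : T -> T, exists h : T -> nat,
    forall x, connect R r x -> x != r -> R x (par x) /\ h (par x) < h x.
Proof.
pose C := [set x | connect R r x].
have step : forall m, exists A : {set T}, exists par : T -> T, exists h : T -> nat,
   [/\ r \in A, A \subset C, valid R r A par h & (m <= #|A| \/ C \subset A)].
  elim=> [|m IHm].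
    exists [set r], id, (fun _ => 0); split.
    - by rewrite inE.
    - by apply/subsetP=> x; rewrite !inE => /eqP ->; rewrite connect0.
    - by move=> x; rewrite inE => ->.
    - by left.
  have [A [par [h [rA AC vA hm]]]] := IHm.
  case: (boolP (C \subset A)) => CA.
    by exists A, par, h; split=> //; right.
  case: hm => [hm|]; last by rewrite (negbTE CA).
  have [u uC uA] : exists2 u, u \in C & u \notin A.
    by case/subsetPn: CA => u uC uA; exists u.
  move: (uC); rewrite inE => /connectP [p pp lp].
  have := cross pp rA; rewrite -lp => /(_ uA) [w [u' [wA u'A Rw]]].
  pose par' := fun z => if z == u' then w else par z.
  pose h' := fun z => if z == u' then (h w).+1 else h z.
  have wu' : (w == u') = false by apply/negbTE; apply: contraNneq u'A => <-.
  exists (u' |: A), par', h'; split.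
  - by rewrite inE rA orbT.
  - apply/subsetP=> x; rewrite in_setU1 => /predU1P [->|xA]; last exact: (subsetP AC).
    move: (subsetP AC _ wA); rewrite !inE => Cw.
    apply: connect_trans Cw _; exact: connect1.
  - move=> x; rewrite in_setU1 => /predU1P [->|xA] xr; rewrite /par' /h'.
      by rewrite eqxx inE wA orbT wu' Rsym Rw.
    have xu : (x == u') = false by apply/negbTE; apply: contraNneq u'A => <-.
    have [pA Rp hp] := vA x xA xr.
    have pu : (par x == u') = false by apply/negbTE; apply: contraNneq u'A => <-.
    by rewrite xu pu inE pA orbT.
  - left; rewrite cardsU1 u'A; lia.
have [A [par [h [rA AC vA hm]]]] := step #|T|.
have CA : C \subset A.
  case: hm => // hm; apply/subsetP=> x _.
  have : A = setT by apply/eqP; rewrite eqEcard subsetT cardsT hm.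
  by move=> ->; rewrite inE.
exists par, h => x Cx xr.
have xC : x \in C by rewrite inE.
by have [] := vA x (subsetP CA x xC) xr.
Qed.

End Grow.
Lemma ar1 k d' d (b1 b2 : bool) : d' + b1 <= d + b2 -> ~~ b2 -> d' - k <= d - k.
Proof. by move=> H /negbTE E; move: H; rewrite E; case: b1 => /= H; lia. Qed.
Lemma ar2 k d' d (b1 b2 : bool) : d' + b1 <= d + b2 -> d < k -> d' - k <= d - k.
Proof. by case: b1; case: b2 => /= H1 H2; lia. Qed.
Lemma ar3 k d' d (c b2 : bool) : d' + (true || c) <= d + b2 -> d' - k <= d - k.
Proof. by case: b2 => /= H; lia. Qed.
Lemma ar4 k d' d : d' + true <= d + false -> k < d -> d' - k < d - k.
Proof. by move=> /= H1 H2; lia. Qed.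
Lemma ar5 a a' s s' : a' < a -> s' <= s -> a' + s' < a + s.
Proof. lia. Qed.
Section Edges.
Variable T : finType.
Variable e : rel T.
Hypothesis esym : symmetric e.
Hypothesis eirr : irreflexive e.

Definition Er (E : {set {set T}}) : rel T := fun a b => [set a; b] \in E.
Lemma Er_sym E : symmetric (Er E).
Proof. by move=> a b; rewrite /Er setUC. Qed.
Definition deg (E : {set {set T}}) u := #|[set f in E | u \in f]|.
Definition isedges (E : {set {set T}}) :=
  forall f, f \in E -> exists p, exists q, e p q /\ f = [set p; q].
Definition ST (E : {set {set T}}) :=
  [/\ isedges E, forall p q, connect (Er E) p q & #|E| = #|T| - 1].

Lemma ST_subtree E : 0 < #|T| -> ST E -> is_subtree e setT E.
Proof.
move=> n0 [iE cE cardE]; rewrite /is_subtree.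
apply/andP; split; last first.
  apply/eqP=> h; move: n0; rewrite -cardsT h cards0 //.
apply/andP; split; last by rewrite cardsT cardE.
apply/andP; split.
  apply/forall_inP=> f fE; have [p [q [epq ->]]] := iE f fE.
  by apply/existsP; exists p; apply/existsP; exists q; rewrite !inE epq eqxx.
by apply/forall_inP=> x _; apply/forall_inP=> y _; exact: cE.
Qed.

Lemma in_set2_neq (a b x : T) : x \in [set a; b] -> x != a -> x = b.
Proof. by rewrite !inE => /orP [/eqP ->|/eqP ->] //; rewrite eqxx. Qed.

Lemma pair_inj r (par : T -> T) (h : T -> nat) (C : {set T}) :
  (forall x, x \in C -> x != r -> h (par x) < h x) ->
  {in C :\ r &, injective (fun x => [set x; par x])}.
Proof.
move=> hC x y; rewrite !inE => /andP [xr xC] /andP [yr yC] eq.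
apply/eqP; apply/negP => /negP nxy.
have xin : x \in [set y; par y] by rewrite -eq !inE eqxx.
have yin : y \in [set x; par x] by rewrite eq !inE eqxx.
have e1 := in_set2_neq xin nxy.
have e2 : y = par x by apply: (in_set2_neq yin); rewrite eq_sym.
have := hC x xC xr; have := hC y yC yr; rewrite -e1 -e2; lia.
Qed.

Lemma tree_from_par r (par : T -> T) (h : T -> nat) :
  (forall x, x != r -> e x (par x) /\ h (par x) < h x) ->
  ST [set [set x; par x] | x in [set: T] :\ r].
Proof.
move=> H; set E := [set _ | x in _].
have inE1 x : x != r -> [set x; par x] \in E.
  by move=> xr; apply: imset_f; rewrite !inE xr.
have cr : forall m x, h x < m -> connect (Er E) x r.
  elim=> [|m IH] x //; case: (eqVneq x r) => [-> _|xr hx]; first exact: connect0.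
  have [_ hp] := H x xr.
  apply: connect_trans (connect1 _) (IH _ _); first exact: inE1.
  lia.
split.
- move=> f /imsetP [x]; rewrite !inE => /andP [xr _] ->.
  by exists x, (par x); split => //; case: (H x xr).
- move=> p q; apply: connect_trans (cr _ p (ltnSn _)) _.
  rewrite (sym_connect_sym (@Er_sym E)); exact: (cr _ q (ltnSn _)).
- rewrite card_in_imset; last first.
    apply: (@pair_inj r par h setT) => x _ xr; by case: (H x xr).
  by have := cardsD1 r [set: T]; rewrite cardsT inE /=; lia.
Qed.

Lemma comp_bound (R : rel T) (Rsym : symmetric R) (F : {set {set T}}) r :
  (forall a b, R a b -> [set a; b] \in F) ->
  #|[set x | connect R r x]| <= #|F| + 1.
Proof.
move=> HF; have [par [h G]] := grow Rsym r.
set C := [set x | connect R r x].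
have hC : forall x, x \in C -> x != r -> h (par x) < h x.
  by move=> x; rewrite inE => Cx xr; case: (G x Cx xr).
have sub : [set [set x; par x] | x in C :\ r] \subset F.
  apply/subsetP=> f /imsetP [x]; rewrite !inE => /andP [xr Cx] ->.
  by apply: HF; case: (G x Cx xr).
have := subset_leq_card sub; rewrite card_in_imset; last exact: pair_inj hC.
by have := cardsD1 r C; rewrite inE connect0 /= => ->; rewrite addnC leq_add2r.
Qed.
Lemma card_filter_sum (A : {set {set T}}) u :
  #|[set f in A | u \in f]| = \sum_(f in A) (u \in f).
Proof.
rewrite -sum1_card big_mkcond /= [RHS]big_mkcond /=.
by apply: eq_bigr => f _; rewrite !inE; case: (f \in A); case: (u \in f).
Qed.

Lemma card_sum (f : {set T}) : #|f| = \sum_u (u \in f).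
Proof.
rewrite -sum1_card big_mkcond /=; apply: eq_bigr => u _; by case: (u \in f).
Qed.

Lemma handshake E : isedges E -> \sum_u deg E u = 2 * #|E|.
Proof.
move=> iE; rewrite /deg.
under eq_bigr => u _ do rewrite card_filter_sum.
rewrite exchange_big /=.
rewrite (eq_bigr (fun _ => 2)); last first.
  move=> f fE; rewrite -card_sum; have [p [q [epq ->]]] := iE f fE.
  rewrite cards2; case: (eqVneq p q) epq => [->|//]; by rewrite eirr.
by rewrite sum_nat_const mulnC.
Qed.
Lemma deg_pos E u : ST E -> 1 < #|T| -> 0 < deg E u.
Proof.
move=> [iE cE _] n1.
have : 0 < #|[set~ u]| by rewrite cardsC1; lia.
case/card_gt0P => [u' ]; rewrite !inE => u'u.
have /connectP [p pp lp] := cE u u'.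
case: p pp lp => [/= _ lp|z p /= /andP [Ruz _] _]; first by rewrite lp eqxx in u'u.
apply/card_gt0P; exists [set u; z]; rewrite !inE eqxx andbT; exact: Ruz.
Qed.

Lemma sum_rest E (U : {set T}) : ST E -> 1 < #|T| ->
  \sum_(u in U) deg E u + #|~: U| <= 2 * (#|T| - 1).
Proof.
move=> sE n1; have [iE _ cardE] := sE.
rewrite -cardE -handshake // [X in _ <= X](bigID (mem U)) /= leq_add2l.
have -> : #|~: U| = \sum_(u | u \notin U) 1.
  by rewrite -sum1_card; apply: eq_bigl => u; rewrite inE.
by apply: leq_sum => u _; exact: deg_pos.
Qed.

Lemma sum3 E v x y : ST E -> 1 < #|T| -> v != x -> v != y -> x != y ->
  deg E v + deg E x + deg E y + (#|T| - 3) <= 2 * (#|T| - 1).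
Proof.
move=> sE n1 vx vy xy; have := sum_rest (v |: (x |: [set y])) sE n1.
rewrite big_setU1 /=; last by rewrite !inE negb_or vx vy.
rewrite big_setU1 /=; last by rewrite !inE xy.
rewrite big_set1.
have := cardsC (v |: (x |: [set y])).
have -> : #|v |: (x |: [set y])| = 3.
  by rewrite cardsU1 !inE negb_or vx vy cards2 xy.
move=> <-; set c := #|~: _|; lia.
Qed.
Definition Fr (E : {set {set T}}) v : rel T := fun a b => [&& Er E a b, a != v & b != v].

Lemma Fr_sym E v : symmetric (Fr E v).
Proof. by move=> a b; rewrite /Fr Er_sym; case: (a != v); case: (b != v); rewrite ?andbF. Qed.

Lemma path_nov E v s p : path (Er E) s p -> s != v -> v \notin p ->
  connect (Fr E v) s (last s p).
Proof.
elim: p s => [|z p IH] s /=; first by move=> *; exact: connect0.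
case/andP=> Esz pz sv; rewrite inE negb_or => /andP [vz vp].
apply: connect_trans (connect1 _) (IH _ pz _ vp); last by rewrite eq_sym.
by rewrite /Fr Esz sv eq_sym vz.
Qed.

Lemma firstv E v s p : path (Er E) s p -> s != v -> v \in p ->
  exists a, connect (Fr E v) s a /\ Er E a v.
Proof.
elim: p s => [|z p IH] s //=.
case/andP=> Esz pz sv; rewrite inE; case: (eqVneq z v) => [zv _|zv /= vp].
  by exists s; rewrite -zv; split => //; exact: connect0.
have [a [ca Ea]] := IH z pz zv vp.
exists a; split => //; apply: connect_trans (connect1 _) ca.
by rewrite /Fr Esz sv zv.
Qed.

Lemma conn_firstv E v s t : connect (Er E) s t -> s != v ->
  ~~ connect (Fr E v) s t -> exists a, connect (Fr E v) s a /\ Er E a v.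
Proof.
move=> /connectP [p pp ->] sv nc; apply: (firstv pp sv).
by apply: contraNT nc => vp; exact: path_nov.
Qed.

Lemma Er_neq E a b : isedges E -> Er E a b -> a != b.
Proof.
move=> iE Eab; have [p [q [epq eq]]] := iE _ Eab.
case: (eqVneq a b) => // ab; move: eq; rewrite -ab setUid => eq.
have : p \in [set a] by rewrite eq !inE eqxx.
have : q \in [set a] by rewrite eq; apply/set2P; right.
by rewrite !inE => /eqP qa /eqP pa; move: epq; rewrite pa qa eirr.
Qed.

Lemma deg_exch (E : {set {set T}}) (g h : {set T}) u : g \in E -> h \notin E ->
  deg (h |: (E :\ g)) u + (u \in g) <= deg E u + (u \in h).
Proof.
move=> gE hE; rewrite /deg; set S := [set f in E | u \in f].
have gS : (g \in S) = (u \in g) by rewrite inE gE.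
rewrite [#|S|](cardsD1 g) gS.
suff : #|[set f in h |: (E :\ g) | u \in f]| <= (u \in h) + #|S :\ g|.
  by move=> H; rewrite addnC -addnA leq_add2l addnC.
case: (boolP (u \in h)) => uh.
  apply: leq_trans (subset_leq_card (_ : _ \subset h |: (S :\ g))) _.
    apply/subsetP=> f; rewrite !inE => /andP [/orP [->//|/andP [fg fE]] uf].
    by rewrite fg fE uf orbT.
  by rewrite cardsU1; case: (h \notin _).
apply: leq_trans (subset_leq_card (_ : _ \subset (S :\ g))) _ => //.
apply/subsetP=> f; rewrite !inE => /andP [/orP [/eqP fh|/andP [fg fE]] uf].
  by move: uf; rewrite fh (negbTE uh).
by rewrite fg fE uf.
Qed.
Definition Mk k (E : {set {set T}}) := \sum_u (deg E u - k).

Definition Gv_conn := forall v x y, x != v -> y != v ->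
  connect [rel a b | [&& a != v, b != v & e a b]] x y.

Lemma card_split (E : {set {set T}}) v :
  #|E| = deg E v + #|[set f in E | v \notin f]|.
Proof.
have := cardsID [set f : {set T} | v \in f] E.
have -> : E :&: [set f : {set T} | v \in f] = [set f in E | v \in f].
  by apply/setP=> f; rewrite !inE.
have -> : E :\: [set f : {set T} | v \in f] = [set f in E | v \notin f].
  by apply/setP=> f; rewrite !inE andbC.
by move=> <-.
Qed.

Lemma exists_cross E v : ST E -> 4 <= #|T| -> 1 < deg E v -> Gv_conn ->
  exists x, exists y, [/\ x != v, y != v, e x y & ~~ connect (Fr E v) x y].
Proof.
move=> sE n4 dv hGv.
case: (boolP [exists x, exists y, [&& x != v, y != v, e x y & ~~ connect (Fr E v) x y]]).
  case/existsP=> x /existsP [y /and4P [xv yv exy nc]]; by exists x, y.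
move=> nex.
have H : forall x y, x != v -> y != v -> connect (Fr E v) x y.
  move=> x y xv yv; apply: (connect_sub _ (hGv v x y xv yv)) => a b /= /and3P [av bv eab].
  move/existsPn: nex => /(_ a) /existsPn /(_ b); rewrite av bv eab /=.
  by rewrite negbK.
have [iE cE cardE] := sE.
have : 0 < #|[set~ v]| by rewrite cardsC1; lia.
case/card_gt0P => [r ]; rewrite !inE => rv.
have cb : #|[set x | connect (Fr E v) r x]| <= #|[set f in E | v \notin f]| + 1.
  apply: comp_bound; first exact: Fr_sym.
  move=> a b /and3P [Eab av bv]; rewrite inE; apply/andP; split => //.
  by rewrite !inE negb_or ![v == _]eq_sym av bv.
have sub : [set~ v] \subset [set x | connect (Fr E v) r x].
  by apply/subsetP=> x; rewrite !inE => xv; exact: H.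
move: cb; have := subset_leq_card sub; rewrite cardsC1.
have := card_split E v; rewrite cardE.
move=> h1 h2 h3; exfalso; lia.
Qed.
Lemma leaf_adj E v x y k : ST E -> 4 <= #|T| -> #|T| <= 2 * k + 1 ->
  k < deg E v -> k <= deg E x -> x != v -> y != v -> x != y ->
  ~~ connect (Fr E v) x y -> Er E x v.
Proof.
move=> sE n4 nk dv dx xv yv xy nc.
have [iE cE cardE] := sE.
have n1 : 1 < #|T| by lia.
have vx : v != x by rewrite eq_sym.
have dz : forall z, z != v -> z != x -> deg E z = 1.
  move=> z zv zx.
  have vz : v != z by rewrite eq_sym.
  have xz : x != z by rewrite eq_sym.
  have := sum3 sE n1 vx vz xz.
  have := deg_pos z sE n1; lia.
have /connectP [p pp lp] := cE x y.
rewrite lp in nc xy yv; move: nc xy yv.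
case: (shortenP pp) => p' pp' up' _ nc xy yv.
case: p' pp' up' nc xy yv => [|z p'']; first by rewrite /= eqxx.
move=> /= /andP [Exz pp''] up' nc xy yv.
case: (eqVneq z v) => [<- //|zv].
have zx : z != x by rewrite eq_sym; exact: (Er_neq iE Exz).
have Fxz : Fr E v x z by rewrite /Fr Exz xv zv.
case: p'' pp'' up' nc xy yv => [|z' q].
  by move=> _ _ /= nc; move: nc; rewrite (connect1 Fxz).
move=> /= /andP [Ezz' _] up' _ _ _.
have : #|[set f in E | z \in f]| <= 1 by have := dz z zv zx; rewrite /deg => ->.
move/card_le1_eqP => H.
have eqs : [set x; z] = [set z; z'].
  apply: H; rewrite !inE.
    by apply/andP; split; [exact: Ezz' | apply/orP; left].
  by apply/andP; split; [exact: Exz | apply/orP; right].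
have : z' \in [set x; z] by rewrite eqs !inE eqxx orbT.
rewrite !inE => /orP [/eqP z'x|/eqP z'z].
  by move: up'; rewrite z'x !inE eqxx !orbT.
by move: (Er_neq iE Ezz'); rewrite z'z eqxx.
Qed.
Lemma exchange_core E v k x y : ST E -> 4 <= #|T| -> #|T| <= 2 * k + 1 ->
  k < deg E v -> x != v -> y != v -> e x y -> ~~ connect (Fr E v) x y ->
  deg E y < k -> exists E', ST E' /\ Mk k E' < Mk k E.
Proof.
move=> sE n4 nk dv xv yv exy nc dy.
have [iE cE cardE] := sE.
have xy : x != y by apply: contraTneq exy => ->; rewrite eirr.
have [a [xa Eav ax]] : exists a, [/\ connect (Fr E v) x a, Er E a v &
    (k <= deg E x -> a = x)].
  case: (leqP k (deg E x)) => dx.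
    exists x; split; [exact: connect0 | | done].
    exact: (leaf_adj sE n4 nk dv dx xv yv xy nc).
  have [a [xa Eav]] := conn_firstv (cE x y) xv nc.
  by exists a; split => //; rewrite leqNgt dx.
have ncyx : ~~ connect (Fr E v) y x.
  by rewrite (sym_connect_sym (@Fr_sym E v)).
have [b [yb Ebv]] := conn_firstv (cE y x) yv ncyx.
have Fsym := sym_connect_sym (@Fr_sym E v).
have ab : a != b.
  apply: contraNneq nc => ab; apply: connect_trans xa _.
  by rewrite ab Fsym.
have ay : a != y.
  by apply: contraNneq nc => <-.
have av : a != v := Er_neq iE Eav.
have bv : b != v := Er_neq iE Ebv.
set g := [set a; v]; set h := [set x; y].
have gE : g \in E := Eav.
have hE : h \notin E.
  apply: contraNN nc => hE; apply: connect1; by rewrite /Fr /Er -/h hE xv yv.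
set E' := h |: (E :\ g).
have sE' : ST E'.
  split.
  - move=> f; rewrite !inE => /orP [/eqP ->|/andP [_ fE]]; last exact: iE.
    by exists x, y.
  - have FE' : subrel (Fr E v) (Er E').
      move=> p q /and3P [Epq pv qv]; rewrite /Er in Epq; rewrite /Er !inE Epq andbT.
      apply/orP; right; apply: contra_neq pv => eq.
      have : v \in [set p; q] by rewrite eq !inE eqxx orbT.
      by rewrite !inE => /orP [/eqP <-|/eqP vq]; [|move: qv; rewrite vq eqxx].
    have FE'c : subrel (Fr E v) (connect (Er E')).
      by move=> p q H; apply: connect1; exact: FE'.
    have cav : connect (Er E') a v.
      apply: connect_trans (_ : connect (Er E') a x) _.
        have ax' : connect (Fr E v) a x by rewrite Fsym.
        exact: (connect_sub FE'c ax').
      apply: connect_trans (connect1 (_ : Er E' x y)) _.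
        by rewrite /Er !inE eqxx.
      apply: connect_trans (connect_sub FE'c yb) _.
      apply: connect1; rewrite /Er in Ebv; rewrite /Er !inE Ebv andbT; apply/orP; right.
      apply: contra_neq ab => eq.
      have : b \in g by rewrite -eq !inE eqxx.
      by rewrite /g !inE => /orP [/eqP ->|/eqP bv']; [|move: bv; rewrite bv' eqxx].
    have Esym' := sym_connect_sym (@Er_sym E').
    move=> p q; apply: (connect_sub _ (cE p q)) => {}p {}q Epq.
    case: (eqVneq [set p; q] g) => [eq|neq].
      have pg : p \in g by rewrite -eq !inE eqxx.
      have qg : q \in g by rewrite -eq !inE eqxx orbT.
      have pq : p != q := Er_neq iE Epq.
      move: pq pg qg; rewrite /g !inE => pq /orP [/eqP pe|/eqP pe] /orP [/eqP qe|/eqP qe];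
        rewrite pe qe in pq *.
      + by rewrite eqxx in pq.
      + exact: cav.
      + by rewrite Esym'.
      + by rewrite eqxx in pq.
    by apply: connect1; rewrite /Er in Epq; rewrite /Er !inE neq Epq orbT.
  - have hEg : h \notin E :\ g by rewrite in_setD1 (negbTE hE) andbF.
    rewrite /E' cardsU1 hEg; have := cardsD1 g E; rewrite gE cardE /=.
    by move=> ->.
have key : forall u, deg E' u - k <= deg E u - k.
  move=> u; have := deg_exch u gE hE; rewrite -/E'.
  case: (boolP (u \in h)) => uh H; first last.
    exact: (ar1 k H isT).
  move: uh H; rewrite /h !inE => /orP [/eqP ->|/eqP ->] H.
    case: (leqP k (deg E x)) => dx; last exact: ar2 H dx.
    move: H; rewrite (ax dx) eqxx; exact: ar3.
  exact: ar2 H dy.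
have keyv : deg E' v - k < deg E v - k.
  have := deg_exch v gE hE; rewrite -/E'.
  rewrite /g /h !inE eqxx orbT ![v == _]eq_sym (negbTE xv) (negbTE yv) /=.
  move=> H; exact: ar4 H dv.
exists E'; split => //.
rewrite /Mk (bigD1 v) //= [X in _ < X](bigD1 v) //=.
apply: ar5 keyv _; apply: leq_sum => u _; exact: key.
Qed.
Lemma exchange E v k : ST E -> 4 <= #|T| -> 2 <= k -> #|T| <= 2 * k + 1 ->
  Gv_conn -> k < deg E v -> exists E', ST E' /\ Mk k E' < Mk k E.
Proof.
move=> sE n4 k2 nk hGv dv.
have dv1 : 1 < deg E v by lia.
have [x [y [xv yv exy nc]]] := exists_cross sE n4 dv1 hGv.
case: (ltnP (deg E y) k) => dy; first exact: exchange_core sE n4 nk dv xv yv exy nc dy.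
have xy : x != y by apply: contraTneq exy => ->; rewrite eirr.
have n1 : 1 < #|T| by lia.
have vx : v != x by rewrite eq_sym.
have vy : v != y by rewrite eq_sym.
have := sum3 sE n1 vx vy xy => S3.
have dx : deg E x < k by lia.
apply: (exchange_core sE n4 nk dv yv xv _ _ dx); first by rewrite esym.
by rewrite (sym_connect_sym (@Fr_sym E v)).
Qed.

Lemma low_tree k E : 4 <= #|T| -> 2 <= k -> #|T| <= 2 * k + 1 -> Gv_conn ->
  ST E -> exists E', ST E' /\ forall u, deg E' u <= k.
Proof.
move=> n4 k2 nk hGv.
suff : forall m E, Mk k E < m -> ST E -> exists E', ST E' /\ forall u, deg E' u <= k.
  by move=> H; apply: (H (Mk k E).+1).
elim=> [|m IH] {}E // hm sE.
case: (boolP [exists u, k < deg E u]).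
  case/existsP=> v dv.
  have [E' [sE' hM]] := exchange sE n4 k2 nk hGv dv.
  apply: (IH E') => //; lia.
move/existsPn=> H; exists E; split => // u; have := H u; by rewrite -leqNgt.
Qed.
Fixpoint colf (r : T) (par : T -> T) (idx : T -> nat) (k m : nat) (x : T) : nat :=
  if m is m'.+1 then
    (if x == r then 0 else (idx x + 1 + colf r par idx k m' (par x)) %% k)
  else 0.

Lemma colf_stable r par idx k (h : T -> nat) :
  (forall x, x != r -> h (par x) < h x) ->
  forall m1 m2 x, h x < m1 -> h x < m2 ->
    colf r par idx k m1 x = colf r par idx k m2 x.
Proof.
move=> hp; elim=> [|m1 IH] [|m2] x //= h1 h2.
case: (eqVneq x r) => // xr; have := hp x xr => hx.
by rewrite (IH m2 (par x)) //; lia.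
Qed.

Lemma mod_ne a C k : 0 < a < k -> (a + C) %% k != C %% k.
Proof.
move=> ha; rewrite -{2}(add0n C) eqn_modDr mod0n modn_small; lia.
Qed.

Lemma mod_ne2 a b C k : a < k -> b < k -> a != b -> (a + C) %% k != (b + C) %% k.
Proof. by move=> ha hb ab; rewrite eqn_modDr !modn_small. Qed.

Lemma tree_colour E k : ST E -> 0 < k -> 0 < #|T| ->
  (forall u, deg E u <= k) -> k_three_proper e k.
Proof.
move=> sE k0 n0 dk.
have [iE cE cardEE] := sE.
case/card_gt0P: n0 => [r _].
have [par [h G]] := grow (@Er_sym E) r.
have G' : forall x, x != r -> Er E x (par x) /\ h (par x) < h x.
  by move=> x; apply: G; apply: cE.
have hlt : forall x, x != r -> h (par x) < h x by move=> x xr; case: (G' x xr).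
have hC : forall x, x \in [set: T] -> x != r -> h (par x) < h x by move=> x _; exact: hlt.
have pinj := pair_inj hC.
have IE : [set [set x; par x] | x in [set: T] :\ r] = E.
  apply/eqP; rewrite eqEcard; apply/andP; split.
    apply/subsetP=> f /imsetP [x]; rewrite !inE andbT => xr ->.
    by case: (G' x xr).
  rewrite card_in_imset // cardEE.
  by have := cardsD1 r [set: T]; rewrite cardsT inE /= => ->; lia.
have Ef : forall f, f \in E -> exists2 x, x != r & f = [set x; par x].
  move=> f; rewrite -IE => /imsetP [x]; rewrite !inE andbT => xr ->.
  by exists x.
pose ch p := [set x | (x != r) && (par x == p)].
pose idx x := index x (enum (ch (par x))).
have chx x : x != r -> x \in ch (par x) by move=> xr; rewrite inE xr eqxx.
have idx_lt x : x != r -> idx x < #|ch (par x)|.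
  by move=> xr; rewrite cardE index_mem mem_enum chx.
have idx_inj x y : x != r -> y != r -> par x = par y -> idx x = idx y -> x = y.
  rewrite /idx => xr yr pe ie; rewrite pe in ie.
  have mx : x \in enum (ch (par y)) by rewrite mem_enum -pe chx.
  have my : y \in enum (ch (par y)) by rewrite mem_enum chx.
  by rewrite -(nth_index x mx) ie (nth_index x my).
have chr p : #|ch p| + (p != r) <= deg E p.
  have sub : [set [set x; p] | x in ch p] \subset [set f in E | p \in f].
    apply/subsetP=> f /imsetP [x]; rewrite inE => /andP [xr /eqP px] ->.
    rewrite !inE eqxx orbT andbT -px; by case: (G' x xr).
  have inj : {in ch p &, injective (fun x => [set x; p])}.
    move=> x y; rewrite !inE => /andP [xr /eqP px] /andP [yr /eqP py] eq.
    have xp : x != p by rewrite -px; case: (G' x xr) => Ex _; exact: Er_neq iE Ex.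
    have : x \in [set y; p] by rewrite -eq !inE eqxx.
    by rewrite !inE (negbTE xp) orbF => /eqP.
  case: (eqVneq p r) => [_|pr] /=.
    by rewrite addn0 -(card_in_imset inj); exact: subset_leq_card.
  have nin : [set p; par p] \notin [set [set x; p] | x in ch p].
    apply/imsetP => [[x]]; rewrite inE => /andP [xr /eqP px] eq.
    have xp : x != p by rewrite -px; case: (G' x xr) => Ex _; exact: Er_neq iE Ex.
    have : x \in [set p; par p] by rewrite eq !inE eqxx.
    rewrite !inE (negbTE xp) /= => /eqP xpp.
    have := hlt x xr; have := hlt p pr; rewrite px -xpp; lia.
  have sub2 : [set p; par p] |: [set [set x; p] | x in ch p] \subset [set f in E | p \in f].
    apply/subsetP=> f; rewrite in_setU1 => /predU1P [->|]; last exact: (subsetP sub).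
    case: (G' p pr) => Ep _; rewrite !inE eqxx andbT; exact: Ep.
  have := subset_leq_card sub2; rewrite cardsU1 nin (card_in_imset inj) /=.
  by rewrite /deg addnC.
pose N := (\max_z h z).+1.
pose col x := colf r par idx k N x.
have colx x : x != r -> col x = (idx x + 1 + col (par x)) %% k.
  move=> xr.
  have -> : col x = (if x == r then 0 else
     (idx x + 1 + colf r par idx k (\max_z h z) (par x)) %% k) by [].
  rewrite (negbTE xr); congr ((_ + _) %% _); rewrite /col /N.
  apply: (colf_stable idx k hlt); have := @leq_bigmax _ h x; have := hlt x xr; lia.
have col_lt x : col x < k.
  case: (eqVneq x r) => [->|xr]; first by rewrite /col /N /= eqxx.
  by rewrite colx // ltn_pmod.
pose c := [ffun f => if [pick x | (x != r) && (f == [set x; par x])] is Some x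
                     then Ordinal (col_lt x) else Ordinal k0].
have cv x : x != r -> val (c [set x; par x]) = col x.
  move=> xr; rewrite ffunE; case: pickP => [x' /andP [x'r /eqP eq]|H] /=.
    have -> // : x' = x by apply: pinj; rewrite ?inE ?x'r ?xr.
  by have := H x; rewrite xr eqxx.
apply/existsP; exists c; apply/forallP => S; apply/implyP => _.
apply/existsP; exists setT; apply/existsP; exists E.
rewrite ST_subtree //; last by apply/card_gt0P; exists r.
rewrite subsetT /=.
apply/forall_inP=> f1 f1E; apply/forall_inP=> f2 f2E.
apply/implyP=> /andP [ne /set0Pn [w]]; rewrite inE => /andP [w1 w2].
have [x xr ex] := Ef f1 f1E; have [y yr ey] := Ef f2 f2E.
subst f1 f2.
have xy : x != y by apply: contraNneq ne => ->.
apply/eqP => /(congr1 val); rewrite (cv x xr) (cv y yr) => eqc.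
have chk p : p != r -> #|ch p| < k by move=> pr; have := chr p; rewrite pr; have := dk p; lia.
move: w1 w2; rewrite !inE => /orP [/eqP wx|/eqP wx] /orP [/eqP wy|/eqP wy].
- by move: xy; rewrite -wx -wy eqxx.
-
  have xpy : par y = x by rewrite -wy -wx.
  move: eqc; rewrite (colx y yr) xpy => eqc.
  have := idx_lt y yr; rewrite xpy => il; have := chk x xr => ck.
  have : 0 < idx y + 1 < k by lia.
  by move/(mod_ne (col x)); rewrite -eqc (modn_small (col_lt x)) eqxx.
- have ypx : par x = y by rewrite -wy -wx.
  move: eqc; rewrite (colx x xr) ypx => eqc.
  have := idx_lt x xr; rewrite ypx => il; have := chk y yr => ck.
  have : 0 < idx x + 1 < k by lia.
  by move/(mod_ne (col y)); rewrite eqc (modn_small (col_lt y)) eqxx.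
- have pxy : par x = par y by rewrite -wx -wy.
  move: eqc; rewrite (colx x xr) (colx y yr) pxy -!addnA => eqc.
  have ix := idx_lt x xr; have iy := idx_lt y yr.
  have := chr (par y); have := dk (par y) => d1 d2.
  have ne2 : idx x != idx y by apply: contra_neq xy; exact: idx_inj.
  rewrite pxy in ix.
  have H2 : (idx x + (1 + col (par y))) %% k != (idx y + (1 + col (par y))) %% k.
    by apply: mod_ne2 => //; lia.
  by rewrite eqc eqxx in H2.
Qed.
End Edges.

Theorem theorem4p2 (T : finType) (e : rel T)
  (esym : symmetric e) (eirr : irreflexive e)
  (hn : 4 <= #|T|) (h2 : two_connected e) (hH : ~ hamiltonian e) :
  px3 e <= #|T| %/ 2.
Proof.
move: h2; rewrite /two_connected => /andP [/andP [_ hc] hv].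
have hGv : Gv_conn e.
  move=> v x y xv yv.
  by move/forallP: hv => /(_ v) /forallP /(_ x) /forallP /(_ y); rewrite xv yv.
have hcon : forall x y, connect e x y.
  by move=> x y; move/forallP: hc => /(_ x) /forallP /(_ y).
set k := #|T| %/ 2.
have k2 : 2 <= k by rewrite /k; lia.
have nk : #|T| <= 2 * k + 1 by rewrite /k; lia.
have n0 : 0 < #|T| by lia.
have [r _] : exists r : T, true by case/card_gt0P: n0 => r _; exists r.
have [par [h G]] := grow esym r.
have sE0 := tree_from_par (fun x xr => G x (hcon r x) xr).
have [E [sE dE]] := low_tree esym eirr hn k2 nk hGv sE0.
have kp : k_three_proper e k.
  apply: (tree_colour eirr sE _ n0 dE); lia.
rewrite /px3; set s := iota _ _.
case: (leqP (find (k_three_proper e) s) k) => // lt.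
have := before_find 0 lt; rewrite nth_iota ?add0n ?kp //.
rewrite ltnS; apply: leq_trans (leq_div _ _) _.
apply: (@leq_card _ _ (@set1 T)); exact: set1_inj.
Qed.
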